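(* Let $\mathcal{F}$ be a class of simple graphs closed under subdivisions. Then $\mathcal{F}\subseteq\mathrm{cl}(\mathcal{F}_K)$ for every non-bipartite graph $K$. In particular, $\equiv_{\mathcal{F}}$ admits $K$-cancellation for every non-bipartite graph $K$.
   Context: All graphs are finite, undirected, without multiple edges; simple means without loops. $\hom(F,G)$ counts homomorphisms; $G\equiv_{\mathcal{F}}H$ means $\hom(F,G)=\hom(F,H)$ for all $F\in\mathcal{F}$; $\mathrm{cl}(\mathcal{F})$ is the class of simple graphs $L$ such that for all simple $G,H$, $G\equiv_{\mathcal{F}}H$ implies $\hom(L,G)=\hom(L,H)$. $\mathcal{F}_K=\{F\in\mathcal{F}\mid\hom(F,K)>0\}$. A class is closed under subdivisions if replacing any edge of a member by a path yields a member. $G\times K$ is the categorical product (vertex set $V(G)\times V(K)$, $(g,k)\sim(g',k')$ iff $gg'\in E(G)$ and $kk'\in E(K)$). An equivalence relation $\approx$ on graphs admits $K$-cancellation if $G\times K\approx H\times K$ implies $G\approx H$ for all graphs $G,H$. *)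

(* Defs.v *)
From mathcomp Require Import all_boot.
Set Implicit Arguments. Unset Strict Implicit. Unset Printing Implicit Defensive.

(* A finite undirected graph without multiple edges (loops allowed):
   a finite vertex type with a symmetric boolean adjacency relation. *)
Record graph := Graph {
  vert :> finType;
  adj : rel vert;
  adj_sym : symmetric adj }.

Definition simple (G : graph) : Prop := forall x : G, ~~ adj x x.

Definition is_hom (F G : graph) (f : {ffun F -> G}) : bool :=
  [forall x : F, forall y : F, adj x y ==> adj (f x) (f y)].
Definition hom (F G : graph) : nat := #|[pred f : {ffun F -> G} | is_hom f]|.

Definition graph_class := graph -> Prop.

Definition hom_equiv (C : graph_class) (G H : graph) : Prop :=
  forall F, C F -> hom F G = hom F H.

Definition cl (C : graph_class) : graph_class := fun L =>
  simple L /\ forall G H : graph, simple G -> simple H -> hom_equiv C G H -> hom L G = hom L H.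

Definition class_K (C : graph_class) (K : graph) : graph_class := fun F =>
  C F /\ 0 < hom F K.

Definition bipartite (K : graph) : Prop :=
  exists c : K -> bool, forall x y : K, adj x y -> c x != c y.

Definition prod_adj (G K : graph) : rel (G * K)%type :=
  fun a b => adj a.1 b.1 && adj a.2 b.2.
Lemma prod_adj_sym (G K : graph) : symmetric (@prod_adj G K).
Proof. by move=> [g k] [g' k']; rewrite /prod_adj /= adj_sym [adj k _]adj_sym. Qed.
Definition gprod (G K : graph) : graph := Graph (@prod_adj_sym G K).

(* Subdivision: replace the edge {u,v} of F by a path u - w_0 - ... - w_n - v
   with n.+1 new internal vertices (path of length n+2). *)
Definition subdiv_dir (F : graph) (u v : F) (n : nat) : rel (F + 'I_n.+1) :=
  fun a b => match a, b with
  | inl x, inl y => adj x y && ~~ ((x == u) && (y == v)) && ~~ ((x == v) && (y == u))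
  | inl x, inr i => (x == u) && (val i == 0)
  | inr i, inl x => (x == v) && (val i == n)
  | inr i, inr j => val j == (val i).+1
  end.
Definition subdiv_adj (F : graph) (u v : F) (n : nat) : rel (F + 'I_n.+1) :=
  fun a b => @subdiv_dir F u v n a b || @subdiv_dir F u v n b a.
Lemma subdiv_adj_sym (F : graph) (u v : F) (n : nat) : symmetric (@subdiv_adj F u v n).
Proof. by move=> a b; rewrite /subdiv_adj orbC. Qed.
Definition subdivide (F : graph) (u v : F) (n : nat) : graph :=
  Graph (@subdiv_adj_sym F u v n).

Definition closed_under_subdivisions (C : graph_class) : Prop :=
  forall (F : graph) (u v : F) (n : nat), C F -> adj u v -> C (subdivide u v n).

Definition admits_cancellation (R : graph -> graph -> Prop) (K : graph) : Prop :=
  forall G H : graph, R (gprod G K) (gprod H K) -> R G H.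

(* Main.v *)
Require Import Defs.
From mathcomp Require Import all_boot.
Set Warnings "-all".
From mathcomp Require Import all_order all_algebra.
From mathcomp Require Import zify.
Import Order.TTheory GRing.Theory Num.Theory.
Import Defs.
Local Open Scope ring_scope.
Ltac show := match goal with |- ?g => idtac g end.

Lemma sym_ker n (A Z : 'M[rat]_n) : A^T = A -> A *m (A *m Z) = 0 -> A *m Z = 0.
Proof.
move=> sA h; set Y := A *m Z.
have hY : Y^T *m Y = 0 by rewrite /Y trmx_mul sA -mulmxA h mulmx0.
apply/matrixP => i j; rewrite [RHS]mxE.
have hs : (Y^T *m Y) j j = 0 by rewrite hY mxE.
rewrite mxE in hs.
have hge : forall k, predT k -> 0 <= Y^T j k * Y k j.
  by move=> k _; rewrite mxE; apply: sqr_ge0.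
have := @psumr_eq0P _ _ predT (fun k => Y^T j k * Y k j) hge hs i isT.
by rewrite mxE => /eqP; rewrite mulf_eq0 orbb => /eqP.
Qed.

Lemma sym_kerX n (A Z : 'M[rat]_n) m : A^T = A -> A ^+ m.+1 *m Z = 0 -> A *m Z = 0.
Proof.
move=> sA; elim: m Z => [|m IH] Z; first by rewrite expr1.
rewrite exprSr -mulmxE -mulmxA => /IH; exact: sym_ker.
Qed.

Lemma ex_r n (A : 'M[rat]_n.+1) : A^T = A ->
  exists2 r : {poly rat}, r.[0] != 0 & A * horner_mx (A * A) r = 0.
Proof.
move=> sA; set B := A * A.
have [k [q q0 pE]] := multiplicity_XsubC (char_poly B) 0.
have pn0 : char_poly B != 0 := monic_neq0 (char_poly_monic B).
rewrite pn0 /= in q0; exists q => //.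
have h := Cayley_Hamilton B.
rewrite pE mulrC polyC0 subr0 rmorphM rmorphXn in h.
rewrite /= horner_mx_X in h.
case: k {pE} h => [|k] h.
  by rewrite expr0 mul1r in h; rewrite h mulr0.
rewrite /B -expr2 -exprM mulnS addSn add1n in h.
rewrite -mulmxE; apply: (@sym_kerX _ A _ (2 * k).+1) => //.
Qed.

Section Lin.
Variables (n : nat) (L : 'M[rat]_n -> rat).
Hypothesis LD : forall M N, L (M + N) = L M + L N.
Hypothesis LZ : forall c M, L (c *: M) = c * L M.
Lemma L0 : L 0 = 0. Proof. by rewrite -(scale0r 0) LZ mul0r. Qed.
Lemma Lsum (I : finType) (F : I -> 'M_n) : L (\sum_i F i) = \sum_i L (F i).
Proof. exact: (big_morph L LD L0). Qed.
End Lin.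

Lemma alg_one n (A : 'M[rat]_n) (q : {poly rat}) (L : 'M[rat]_n -> rat) j :
  (forall M N, L (M + N) = L M + L N) -> (forall c M, L (c *: M) = c * L M) ->
  (match n return 'M[rat]_n -> Prop with
   | 0 => fun _ => True
   | n'.+1 => fun A => A = A * horner_mx (A * A) ('X * q) end) A ->
  L A = \sum_(m < size (('X * q) ^+ j)) (('X * q) ^+ j)`_m * L (A ^+ m.*2.+1).
Proof.
move=> LD LZ; set P := (_ ^+ j).
case: n A L LD LZ => [|n] A L LD LZ /= hA.
  rewrite thinmx0 L0 //; apply/esym/big1 => m _.
  by rewrite thinmx0 L0 // mulr0.
have hAj : A = A * horner_mx (A * A) P.
  rewrite /P rmorphXn; clear P; elim: j => [|j IH]; first by rewrite expr0 mulr1.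
  by rewrite exprSr mulrA -IH.
have hexp : horner_mx (A*A) P = \sum_(m < size P) P`_m *: (A*A)^+m.
  rewrite -{1}[P]coefK poly_def rmorph_sum; apply: eq_bigr => m _.
  by rewrite -mul_polyC rmorphM /= horner_mx_C rmorphXn /= horner_mx_X -mulmxE mul_scalar_mx.
rewrite {1}hAj hexp mulr_sumr Lsum //; apply: eq_bigr => m _.
by rewrite -scalerAr LZ -expr2 -exprM -exprS mul2n.
Qed.

Lemma alg_main n1 n2 (A1 : 'M[rat]_n1) (A2 : 'M[rat]_n2)
  (L1 : 'M[rat]_n1 -> rat) (L2 : 'M[rat]_n2 -> rat) t0 :
  A1^T = A1 -> A2^T = A2 ->
  (forall M N, L1 (M + N) = L1 M + L1 N) -> (forall c M, L1 (c *: M) = c * L1 M) ->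
  (forall M N, L2 (M + N) = L2 M + L2 N) -> (forall c M, L2 (c *: M) = c * L2 M) ->
  (forall t, (t0 <= t)%N -> L1 (A1 ^+ t.*2.+1) = L2 (A2 ^+ t.*2.+1)) ->
  L1 A1 = L2 A2.
Proof.
move=> s1 s2 L1D L1Z L2D L2Z H.
have exr : forall n (A : 'M[rat]_n), A^T = A -> exists2 r : {poly rat}, r.[0] != 0 &
    (match n return 'M[rat]_n -> Prop with
     | 0 => fun _ => True
     | n'.+1 => fun A => A * horner_mx (A * A) r = 0 end) A.
  move=> [|n] A sA; first by exists 1; rewrite ?hornerC ?oner_neq0.
  exact: ex_r.
have [r1 r10 h1] := exr _ _ s1; have [r2 r20 h2] := exr _ _ s2.
set r := r1 * r2.
have r0 : r.[0] != 0 by rewrite hornerM mulf_neq0.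
have [s sE] : exists s, r - r.[0]%:P = s * ('X - 0%:P).
  by apply/factor_theorem; rewrite /root hornerD hornerN hornerC subrr.
rewrite polyC0 subr0 in sE.
set q := - (r.[0])^-1 *: s.
have key : forall n (A : 'M[rat]_n),
    (match n return 'M[rat]_n -> Prop with
     | 0 => fun _ => True
     | n'.+1 => fun A => A * horner_mx (A * A) r = 0 end) A ->
    (match n return 'M[rat]_n -> Prop with
     | 0 => fun _ => True
     | n'.+1 => fun A => A = A * horner_mx (A * A) ('X * q) end) A.
  move=> [|n] A //= hA.
  have rE : r = r.[0]%:P + 'X * s by rewrite mulrC -sE addrC subrK.
  rewrite rE rmorphD /= rmorphM /= horner_mx_C horner_mx_X mulrDr in hA.
  have e1 : A * (r.[0])%:M = r.[0] *: A by rewrite -mulmxE mul_mx_scalar.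
  have e : A * ((A*A) * horner_mx (A*A) s) = - (r.[0] *: A).
    by apply/eqP; rewrite -addr_eq0 addrC -e1 hA.
  rewrite rmorphM /= horner_mx_X /q horner_mxZ -!scalerAr e scalerN scalerA.
  by rewrite mulNr mulVf // scaleNr opprK scale1r.
have gen : forall n (A : 'M[rat]_n) (p1 p2 : {poly rat}),
    (match n return 'M[rat]_n -> Prop with
     | 0 => fun _ => True
     | n'.+1 => fun A => A * horner_mx (A * A) p1 = 0 end) A ->
    (match n return 'M[rat]_n -> Prop with
     | 0 => fun _ => True
     | n'.+1 => fun A => A * horner_mx (A * A) (p1 * p2) = 0 end) A.
  by move=> [|n] A p1 p2 //= h; rewrite rmorphM mulrA h mul0r.
have g1 := key _ _ (gen _ _ _ r2 h1).
have g2' := gen _ _ _ r1 h2; rewrite mulrC -/r in g2'.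
have g2 := key _ _ g2'.
rewrite (@alg_one _ A1 q L1 t0 L1D L1Z g1) (@alg_one _ A2 q L2 t0 L2D L2Z g2).
apply: eq_bigr => -[m _] _ /=.
rewrite exprMn coefXnM; case: ltnP => hm; first by rewrite !mul0r.
by rewrite H.
Qed.

Set Implicit Arguments. Unset Strict Implicit. Unset Printing Implicit Defensive.


Lemma prod_bool (I : finType) (P : pred I) :
  \prod_(i : I) ((P i)%:R : rat) = ([forall i, P i])%:R.
Proof.
case: (boolP [forall i, P i]) => [/forallP h|/forallPn [i /negbTE hi]].
  by apply: big1 => i _; rewrite h.
by rewrite (bigD1 i) //= hi mul0r.
Qed.

Lemma prod_bool_seq (T : Type) (s : seq T) (P : pred T) :
  \prod_(x <- s) ((P x)%:R : rat) = (all P s)%:R.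
Proof.
elim: s => [|x s IH]; first by rewrite big_nil.
by rewrite big_cons IH /= -natrM mulnb.
Qed.

Definition fjoin (I1 I2 T : finType) (g : {ffun I1 -> T}) (h : {ffun I2 -> T}) :
  {ffun I1 + I2 -> T} := [ffun a => match a with inl x => g x | inr y => h y end].

Lemma sum_ffun_sum (I1 I2 T : finType) (F : {ffun I1 + I2 -> T} -> rat) :
  \sum_f F f = \sum_(g : {ffun I1 -> T}) \sum_(h : {ffun I2 -> T}) F (fjoin g h).
Proof.
rewrite pair_big /=.
rewrite (reindex (fun p : {ffun I1 -> T} * {ffun I2 -> T} => fjoin p.1 p.2)) //.
exists (fun f : {ffun I1 + I2 -> T} => ([ffun x => f (inl x)], [ffun y => f (inr y)])).
  by move=> [g h] _ /=; congr pair; apply/ffunP => x; rewrite !ffunE.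
by move=> f _; apply/ffunP => -[x|y]; rewrite !ffunE.
Qed.

Definition fcons (n : nat) (T : finType) (x : T) (h : {ffun 'I_n -> T}) : {ffun 'I_n.+1 -> T} :=
  [ffun i => if unlift ord0 i is Some j then h j else x].

Lemma fcons0 n (T : finType) x (h : {ffun 'I_n -> T}) : fcons x h ord0 = x.
Proof. by rewrite ffunE unlift_none. Qed.
Lemma fconsS n (T : finType) x (h : {ffun 'I_n -> T}) j : fcons x h (lift ord0 j) = h j.
Proof. by rewrite ffunE liftK. Qed.

Lemma sum_ffun_cons (n : nat) (T : finType) (F : {ffun 'I_n.+1 -> T} -> rat) :
  \sum_f F f = \sum_(x : T) \sum_(h : {ffun 'I_n -> T}) F (fcons x h).
Proof.
rewrite pair_big /=.
rewrite (reindex (fun p : T * {ffun 'I_n -> T} => fcons p.1 p.2)) //.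
exists (fun f : {ffun 'I_n.+1 -> T} => (f ord0, [ffun j => f (lift ord0 j)])).
  by move=> [x h] _ /=; rewrite fcons0; congr pair; apply/ffunP => j; rewrite ffunE fconsS.
move=> f _; apply/ffunP => i; rewrite /= ffunE.
by case: unliftP => [j ->|->]; rewrite ?ffunE.
Qed.


Section Target.
Variable X : graph.
Definition AX : 'M[rat]_#|X| := \matrix_(i, j) (adj (enum_val i) (enum_val j))%:R.
Definition pw (k : nat) (p q : X) : rat := (AX ^+ k) (enum_rank p) (enum_rank q).

Lemma pw1 p q : pw 1 p q = (adj p q)%:R.
Proof. by rewrite /pw expr1 mxE !enum_rankK. Qed.

Lemma AX_sym : AX^T = AX.
Proof. by apply/matrixP => i j; rewrite !mxE adj_sym. Qed.

Lemma pwS k p q : pw k.+1 p q = \sum_(y : X) (adj p y)%:R * pw k y q.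
Proof.
rewrite /pw exprS -mulmxE mxE.
rewrite (reindex (@enum_rank X)) /=; last first.
  by exists enum_val => i _; rewrite ?enum_rankK ?enum_valK.
by apply: eq_bigr => y _; rewrite mxE !enum_rankK.
Qed.

Definition PP (V : finType) (M : V -> V -> X -> X -> rat) (f : {ffun V -> X}) :=
  \prod_(a : V) \prod_(b : V) M a b (f a) (f b).
Definition gwt (S : graph) (a b : S) (p q : X) : rat := (adj a b ==> adj p q)%:R.

Lemma PP_gw (S : graph) (f : {ffun S -> X}) : PP (@gwt S) f = (is_hom f)%:R.
Proof. by rewrite /PP; under eq_bigr do rewrite prod_bool; rewrite prod_bool. Qed.

Lemma hom_gw (S : graph) : (hom S X)%:R = \sum_(f : {ffun S -> X}) PP (@gwt S) f.
Proof.
rewrite /hom -sum1_card natr_sum big_mkcond /=; apply: eq_bigr => f _.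
by rewrite PP_gw inE; case: (is_hom f).
Qed.

Definition wk n (p : X) (h : {ffun 'I_n.+1 -> X}) (q : X) : bool :=
  [&& adj p (h ord0), adj (h ord_max) q &
      [forall i : 'I_n.+1, forall j : 'I_n.+1, (val j == (val i).+1) ==> adj (h i) (h j)]].

Arguments wk : clear implicits.
Lemma lift0_max n : lift ord0 (@ord_max n) = ord_max.
Proof. by apply: val_inj; rewrite /= /bump leq0n. Qed.

Lemma wk_cons n p x (h : {ffun 'I_n.+1 -> X}) q :
  wk n.+1 p (fcons x h) q = adj p x && wk n x h q.
Proof.
rewrite /wk fcons0 -lift0_max fconsS; case: (adj p x) => //=.
case: (adj (h ord_max) q); rewrite ?andbF //=.
apply/idP/idP.
  move/forallP=> H; apply/andP; split.
    have := H ord0; move/forallP/(_ (lift ord0 ord0)).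
    by rewrite lift0 /= fcons0 fconsS.
  apply/forallP => i; apply/forallP => j; apply/implyP => hij.
  have := H (lift ord0 i); move/forallP/(_ (lift ord0 j)).
  by rewrite !lift0 /= eqSS hij !fconsS.
case/andP=> hx /forallP H; apply/forallP => i; apply/forallP => j; apply/implyP.
case: (unliftP ord0 i) => [i' ->|->]; case: (unliftP ord0 j) => [j' ->|->] //=;
  rewrite ?lift0 //=.
- by rewrite !fconsS eqSS => hij; have := H i'; move/forallP/(_ j')/implyP; apply.
- move=> hj; have -> : j' = ord0 by apply: val_inj => /=; apply/eqP.
  by rewrite fcons0 fconsS.
Qed.

Lemma walk_sum n (p q : X) : \sum_(h : {ffun 'I_n.+1 -> X}) (wk n p h q)%:R = pw n.+2 p q.
Proof.
elim: n p => [|n IH] p.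
  rewrite sum_ffun_cons pwS; apply: eq_bigr => x _.
  have E : forall h : {ffun 'I_0 -> X}, wk 0 p (fcons x h) q = adj p x && adj x q.
    move=> h; rewrite /wk fcons0.
    have -> : (ord_max : 'I_1) = ord0 by apply: val_inj.
    rewrite fcons0; case: (adj p x) (adj x q) => [] [] //=.
    by apply/forallP => i; apply/forallP => j; rewrite !ord1.
  under eq_bigr do rewrite E.
  by rewrite sumr_const card_ffun card_ord expn0 pw1 -natrM mulnb.
rewrite sum_ffun_cons pwS; apply: eq_bigr => x _.
under eq_bigr do rewrite wk_cons.
case: (adj p x) => /=; last by rewrite mul0r; apply: big1.
by rewrite mul1r IH.
Qed.

End Target.


Lemma prod_bool2 (I J : finType) (P : I -> J -> bool) :
  \prod_(i : I) \prod_(j : J) ((P i j)%:R : rat) = ([forall i, forall j, P i j])%:R.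
Proof. under eq_bigr do rewrite prod_bool; exact: prod_bool. Qed.

Section Target.
Variable X : graph.

Definition lift_w (S : graph) (u v : S) n (M : S -> S -> X -> X -> rat) :
  (S + 'I_n.+1)%type -> (S + 'I_n.+1)%type -> X -> X -> rat :=
 fun a b => match a, b with
 | inl x, inl y => M x y
 | _, _ => fun p q => (@subdiv_adj S u v n a b ==> adj p q)%:R end.

Definition upd (V : finType) (M : V -> V -> X -> X -> rat) (u v : V) k : V -> V -> X -> X -> rat :=
  fun x y p q => M x y p q * (if (x == u) && (y == v) then pw k p q else 1).

Lemma PP_upd (V : finType) M (u v : V) k f : PP (upd M u v k) f = PP M f * pw k (f u) (f v).
Proof.
rewrite /PP /upd; under eq_bigr do rewrite big_split; rewrite big_split /=; congr (_ * _).
rewrite (bigD1 u) //= [X in _ * X]big1 ?mulr1; last first.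
  by move=> a /negbTE ->; apply: big1.
rewrite (bigD1 v) //= !eqxx [X in _ * X]big1 ?mulr1 // => b /negbTE ->.
by rewrite andbF.
Qed.

Lemma PP_lift (S : graph) (u v : S) n M (g : {ffun S -> X}) (h : {ffun 'I_n.+1 -> X}) :
  PP (@lift_w S u v n M) (fjoin g h) = PP M g * (wk (g u) h (g v))%:R.
Proof.
rewrite /PP big_sumType /=.
under eq_bigr do rewrite big_sumType /=.
under [X in _ * X]eq_bigr do rewrite big_sumType /=.
rewrite !big_split /= -mulrA; congr (_ * _).
  by apply: eq_bigr => x _; apply: eq_bigr => y _; rewrite !ffunE.
rewrite !prod_bool2 -!natrM !mulnb; congr (nat_of_bool _)%:R.
rewrite /wk; apply/idP/idP.
  case/and3P => /forallP H1 /forallP H2 /forallP H3.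
  have := H1 u; move/forallP/(_ ord0); rewrite /subdiv_adj /= eqxx !ffunE /= => a1.
  have := H1 v; move/forallP/(_ ord_max); rewrite /subdiv_adj /= !eqxx orbT !ffunE /= => a2.
  rewrite a1 adj_sym a2 /=; apply/forallP => i; apply/forallP => j; apply/implyP => hij.
  by have := H3 i; move/forallP/(_ j); rewrite /subdiv_adj /= hij !ffunE.
case/and3P => a1 a2 /forallP a3.
apply/and3P; split; apply/forallP => i; apply/forallP => j;
  rewrite /subdiv_adj /= !ffunE; apply/implyP.
- case/orP => /andP[/eqP -> /eqP hj].
    have -> : j = ord0 by apply: val_inj.
    by [].
  have -> : j = ord_max by apply: val_inj; exact: hj.
  by rewrite adj_sym.
- case/orP => /andP[/eqP -> /eqP hi].
    have -> : i = ord_max by apply: val_inj; exact: hi.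
    by [].
  have -> : i = ord0 by apply: val_inj.
  by rewrite adj_sym.
- case/orP => hij; first by have := a3 i; move/forallP/(_ j)/implyP; apply.
  by rewrite adj_sym; have := a3 j; move/forallP/(_ i)/implyP; apply.
Qed.

Lemma core (S : graph) (u v : S) n (M : S -> S -> X -> X -> rat) :
  \sum_(f : {ffun (S + 'I_n.+1)%type -> X}) PP (@lift_w S u v n M) f =
  \sum_(f : {ffun S -> X}) PP (upd M u v n.+2) f.
Proof.
rewrite sum_ffun_sum; apply: eq_bigr => g _.
under eq_bigr do rewrite PP_lift.
by rewrite -mulr_sumr walk_sum PP_upd.
Qed.

End Target.


Record sdata (F : graph) := SData {
  sg : graph; emb : F -> sg; einv : sg -> option F;
  einvK : forall x, einv (emb x) = Some x;
  embK : forall a x, einv a = Some x -> a = emb x }.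
Arguments sg {F} s.
Arguments einv {F} s _.
Arguments emb {F} s _.
Arguments einvK {F} s x.
Arguments embK {F} s {a x} _.

Definition sbase (F : graph) : sdata F.
refine (@SData F F id Some _ _); [by [] | by move=> a x [->]].
Defined.

Definition sstep (F : graph) (D : sdata F) (x y : F) (n : nat) : sdata F.
refine (@SData F (subdivide (emb D x) (emb D y) n) (fun z => inl (emb D z))
  (fun a => match a with inl b => einv D b | inr _ => None end) _ _).
- move=> z; exact: einvK.
- by move=> [b|i] z //= h; rewrite (embK D h).
Defined.

Fixpoint slist (F : graph) (ln : F -> F -> nat) (es : seq (F * F)) : sdata F :=
  match es with
  | [::] => sbase F
  | p :: es' => sstep (slist ln es') p.1 p.2 (ln p.1 p.2)
  end.

Lemma emb_eq F (D : sdata F) x y : (emb D x == emb D y) = (x == y).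
Proof.
apply/eqP/eqP => [h|->] //.
by have := einvK D x; rewrite h (einvK D) => -[].
Qed.

Lemma einv_none F (D : sdata F) a x : einv D a = None -> (a == emb D x) = false.
Proof. by move=> h; apply/negbTE/eqP => e; move: h; rewrite e (einvK D). Qed.

Lemma adj_slist (F : graph) (ln : F -> F -> nat) (es : seq (F * F)) (x y : F) :
  adj (emb (slist ln es) x) (emb (slist ln es) y) = [&& adj x y, (x, y) \notin es & (y, x) \notin es].
Proof.
elim: es => [|[p1 p2] es IH] /=; first by rewrite andbT.
rewrite /subdiv_adj /subdiv_dir /= (adj_sym (emb _ y)) !emb_eq IH !in_cons !xpair_eqE.
by case: (adj x y); case: (x == p1); case: (y == p2); case: (x == p2); case: (y == p1);
  case: ((x, y) \in es); case: ((y, x) \in es).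
Qed.

Lemma C_slist (C : graph_class) (F : graph) (ln : F -> F -> nat) (es : seq (F * F)) : closed_under_subdivisions C -> C F -> uniq es ->
  (forall p, p \in es -> adj p.1 p.2 && ((p.2, p.1) \notin es)) -> C (sg (slist ln es)).
Proof.
move=> HC CF; elim: es => [|[p1 p2] es IH] //= /andP[pnin ues] H.
apply: HC.
  apply: IH => // q qin; have := H q; rewrite in_cons qin orbT => /(_ isT) /andP[-> /=].
  by rewrite in_cons negb_or => /andP[].
rewrite adj_slist pnin /=.
by have := H (p1, p2) (mem_head _ _); rewrite in_cons negb_or /= => /andP[-> /andP[]].
Qed.

Lemma orb_adj (G : graph) (x y : G) : adj x y || adj y x = adj x y.
Proof. by rewrite adj_sym orbb. Qed.

Section Target.
Variable X : graph.

Definition hatW F (D : sdata F) (M : F -> F -> X -> X -> rat) (a b : sg D) : X -> X -> rat :=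
  match einv D a, einv D b with Some x, Some y => M x y | _, _ => @gwt X (sg D) a b end.

Fixpoint updl (F : graph) (ln : F -> F -> nat) (es : seq (F * F)) (M : F -> F -> X -> X -> rat) : F -> F -> X -> X -> rat :=
  match es with
  | [::] => M
  | p :: es' => updl ln es' (upd M p.1 p.2 (ln p.1 p.2).+2)
  end.

Lemma eq_PP (V : finType) (M1 M2 : V -> V -> X -> X -> rat) (f : {ffun V -> X}) :
  (forall a b, M1 a b (f a) (f b) = M2 a b (f a) (f b)) -> PP M1 f = PP M2 f.
Proof. by move=> h; apply: eq_bigr => a _; apply: eq_bigr => b _. Qed.

Lemma claim (F : graph) (ln : F -> F -> nat) (es : seq (F * F)) (M : F -> F -> X -> X -> rat) :
  \sum_(f : {ffun sg (slist ln es) -> X}) PP (hatW M) f =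
  \sum_(f : {ffun F -> X}) PP (updl ln es M) f.
Proof.
elim: es M => [|p es IH] M /=; first by [].
set D := slist ln es; set n := ln p.1 p.2.
transitivity (\sum_(f : {ffun (sg D + 'I_n.+1)%type -> X})
   PP (@lift_w X (sg D) (emb D p.1) (emb D p.2) n (hatW M)) f).
  apply: eq_bigr => f _; apply: eq_PP => a b.
  case: a => [a|i]; case: b => [b|j] //=; rewrite /hatW /=.
  - case ea: (einv D a) => [x|]; case eb: (einv D b) => [y|] //; rewrite /gwt /=;
      rewrite /subdiv_adj /subdiv_dir /= ?(einv_none _ ea) ?(einv_none _ eb) /= ?andbF ?andbT
        ?orb_adj //.
  - by case: (einv D _).
rewrite (@core X (sg D) (emb D p.1) (emb D p.2) n (hatW M)) -IH; apply: eq_bigr => f _; apply: eq_PP => a b.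
rewrite /upd /hatW.
case ea: (einv D a) => [x|]; case eb: (einv D b) => [y|].
- by rewrite (embK D ea) (embK D eb) !emb_eq.
- by rewrite (einv_none _ eb) andbF mulr1.
- by rewrite (einv_none _ ea) mulr1.
- by rewrite (einv_none _ ea) mulr1.
Qed.

End Target.


Definition T (F X : graph) (es : seq (F * F)) (k : F -> F -> nat) : rat :=
  \sum_(f : {ffun F -> X}) \prod_(p <- es) @pw X (k p.1 p.2) (f p.1) (f p.2).

Lemma T_ext (F X : graph) es (k1 k2 : F -> F -> nat) :
  (forall p, p \in es -> k1 p.1 p.2 = k2 p.1 p.2) -> T X es k1 = T X es k2.
Proof. by move=> h; apply: eq_bigr => f _; apply: eq_big_seq => p /h ->. Qed.

Lemma PP_updl (X F : graph) (ln : F -> F -> nat) es (M : F -> F -> X -> X -> rat) f :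
  PP (updl ln es M) f = PP M f * \prod_(p <- es) @pw X (ln p.1 p.2).+2 (f p.1) (f p.2).
Proof.
elim: es M => [|p es IH] M /=; first by rewrite big_nil mulr1.
by rewrite IH PP_upd big_cons mulrA.
Qed.

Section Edges.
Variables (F : graph) (es : seq (F * F)).
Hypothesis Hadj : forall p, p \in es -> adj p.1 p.2.
Hypothesis Hcov : forall x y, adj x y -> ((x, y) \in es) || ((y, x) \in es).

Lemma hom_sub (X : graph) (ln : F -> F -> nat) :
  (hom (sg (slist ln es)) X)%:R = T X es (fun x y => (ln x y).+2).
Proof.
set D := slist ln es.
rewrite hom_gw.
transitivity (\sum_(f : {ffun sg D -> X}) PP (hatW (fun x y => @gwt X (sg D) (emb D x) (emb D y))) f).
  apply: eq_bigr => f _; apply: eq_PP => a b; rewrite /hatW.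
  case ea: (einv D a) => [x|] //; case eb: (einv D b) => [y|] //.
  by rewrite (embK D ea) (embK D eb).
rewrite claim; apply: eq_bigr => f _; rewrite PP_updl.
rewrite [X in X * _](_ : _ = 1) ?mul1r //.
apply: big1 => x _; apply: big1 => y _.
rewrite /gwt adj_slist.
case h: (adj x y) => //=.
by have := Hcov h; case: ((x, y) \in es); case: ((y, x) \in es).
Qed.

Lemma hom_base (X : graph) : (hom F X)%:R = T X es (fun _ _ => 1%N).
Proof.
rewrite hom_gw; apply: eq_bigr => f _.
rewrite PP_gw; under eq_big_seq => p _ do rewrite pw1.
rewrite prod_bool_seq; congr (nat_of_bool _)%:R.
apply/idP/idP.
  move/forallP => H; apply/allP => p /Hadj hp.
  by have := H p.1; move/forallP/(_ p.2)/implyP; apply.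
move/allP => H; apply/forallP => x; apply/forallP => y; apply/implyP => hxy.
case/orP: (Hcov hxy) => /H //=.
by rewrite adj_sym.
Qed.

End Edges.


Lemma sum_pos_term (I : finType) (Fn : I -> rat) j :
  (forall i, 0 <= Fn i) -> 0 < Fn j -> 0 < \sum_i Fn i.
Proof.
move=> h0 hj; rewrite (bigD1 j) //=; apply: (lt_le_trans hj).
by rewrite lerDl; apply: sumr_ge0.
Qed.

Section Pos.
Variable X : graph.

Lemma AXk_ge0 k i j : 0 <= (AX X ^+ k) i j.
Proof.
elim: k i j => [|k IH] i j; first by rewrite expr0 mxE ler0n.
rewrite exprS -mulmxE mxE; apply: sumr_ge0 => l _.
by apply: mulr_ge0 => //; rewrite mxE ler0n.
Qed.

Lemma pw_ge0 k (p q : X) : 0 <= pw k p q.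
Proof. exact: AXk_ge0. Qed.

Lemma pw_add a b (p q r : X) : pw a p q * pw b q r <= pw (a + b) p r.
Proof.
rewrite /pw exprD -mulmxE mxE (bigD1 (enum_rank q)) //=.
by rewrite lerDl; apply: sumr_ge0 => l _; apply: mulr_ge0; apply: AXk_ge0.
Qed.

Lemma pw0 (p : X) : pw 0 p p = 1.
Proof. by rewrite /pw expr0 mxE eqxx. Qed.

Lemma pw_step c (z : X) : 0 < pw c.+1 z z -> 0 < pw 2 z z.
Proof.
rewrite pwS => h.
case: (boolP [exists y, adj z y]) => [/existsP [y hy]|/existsPn H].
  rewrite pwS; apply: (@sum_pos_term _ _ y).
    by move=> i; apply: mulr_ge0 => //; apply: pw_ge0.
  by rewrite hy pw1 adj_sym hy mul1r ltr01.
by move: h; rewrite big1 ?ltxx // => y _; rewrite (negbTE (H y)) mul0r.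
Qed.

Lemma pw_pos_odd c (z : X) : 0 < pw c z z -> odd c ->
  forall t, (c./2 <= t)%N -> 0 < pw t.*2.+1 z z.
Proof.
move=> hc oc t ht.
have p2 : 0 < pw 2 z z by case: c hc oc {ht} => // c hc _; exact: (pw_step hc).
have -> : t.*2.+1 = (c + (t - c./2).*2)%N.
  have := odd_double_half c; rewrite oc => e.
  rewrite -{2}e -!mul2n; lia.
elim: (t - c./2)%N => [|j IH]; first by rewrite addn0.
have -> : (c + j.+1.*2 = (c + j.*2) + 2)%N by rewrite doubleS; lia.
by apply: (lt_le_trans _ (pw_add _ _ _ z _)); apply: mulr_gt0.
Qed.
End Pos.

Lemma T_pos (F K : graph) (es : seq (F * F)) (k : F -> F -> nat) (z : K) :
  (forall p, p \in es -> 0 < pw (k p.1 p.2) z z) -> 0 < T K es k.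
Proof.
move=> h; apply: (@sum_pos_term _ _ [ffun _ => z]).
  by move=> f; apply: prodr_ge0 => p _; apply: pw_ge0.
rewrite big_seq; apply: prodr_gt0 => p pin; rewrite !ffunE; exact: h.
Qed.


Definition kR (F : graph) (R : seq (F * F)) (s : F -> F -> nat) (x y : F) : nat :=
  if (x, y) \in R then 1%N else (s x y).*2.+1.

Section ClaimB.
Variables (F : graph) (es : seq (F * F)) (G H : graph) (t0 : nat).
Hypothesis ues : uniq es.

Definition Lam (X : graph) (p : F * F) (k : F -> F -> nat) (M : 'M[rat]_#|X|) : rat :=
  \sum_(f : {ffun F -> X}) M (enum_rank (f p.1)) (enum_rank (f p.2)) *
     \prod_(q <- es | q != p) @pw X (k q.1 q.2) (f q.1) (f q.2).

Lemma Lam_T (X : graph) p k m : p \in es ->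
  T X es (fun x y => if (x, y) == p then m else k x y) = Lam p k (AX X ^+ m).
Proof.
move=> pin; apply: eq_bigr => f _; rewrite (bigD1_seq p) //= -surjective_pairing eqxx.
congr (_ * _); apply: eq_bigr => q hq; by rewrite -surjective_pairing (negbTE hq).
Qed.

Lemma LamD (X : graph) p k M N : Lam (X := X) p k (M + N) = Lam p k M + Lam p k N.
Proof. by rewrite /Lam -big_split; apply: eq_bigr => f _; rewrite mxE mulrDl. Qed.

Lemma LamZ (X : graph) p k c M : Lam (X := X) p k (c *: M) = c * Lam p k M.
Proof. by rewrite /Lam mulr_sumr; apply: eq_bigr => f _; rewrite mxE mulrA. Qed.

Lemma claimB :
  (forall s : F -> F -> nat, (forall x y, (t0 <= s x y)%N) ->
     T G es (fun x y => (s x y).*2.+1) = T H es (fun x y => (s x y).*2.+1)) ->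
  T G es (fun _ _ => 1%N) = T H es (fun _ _ => 1%N).
Proof.
move=> hyp.
suff: forall R, {subset R <= es} -> forall s, (forall x y, (t0 <= s x y)%N) ->
    T G es (kR R s) = T H es (kR R s).
  move/(_ es (fun _ h => h) (fun _ _ => t0) (fun _ _ => leqnn t0)).
  by rewrite !(@T_ext _ _ es (kR es _) (fun _ _ => 1%N)) // => p pin;
    rewrite /kR -surjective_pairing pin.
elim=> [|p R IH] hsub s hs.
  by rewrite !(@T_ext _ _ es (kR [::] s) (fun x y => (s x y).*2.+1)) ?hyp.
have pin : p \in es by apply: hsub; rewrite mem_head.
have hsubR : {subset R <= es} by move=> q qR; apply: hsub; rewrite in_cons qR orbT.
case pR: (p \in R).
  rewrite !(@T_ext _ _ es (kR (p :: R) s) (kR R s)) ?IH // => q _;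
    rewrite /kR in_cons; case: eqP => // ->; by rewrite pR.
set k' := kR (p :: R) s.
have e1 : forall X : graph, T X es k' = Lam p k' (AX X).
  move=> X; rewrite -[AX X]expr1 -Lam_T //; apply: T_ext => q _.
  case: eqP => [e|//]; by rewrite /k' /kR e mem_head.
rewrite !e1; apply: (@alg_main _ _ _ _ _ _ t0 (AX_sym G) (AX_sym H)).
- exact: LamD.
- exact: LamZ.
- exact: LamD.
- exact: LamZ.
move=> t ht; rewrite -!Lam_T //.
pose st := fun x y => if (x, y) == p then t else s x y.
have st0 : forall x y, (t0 <= st x y)%N by move=> x y; rewrite /st; case: eqP.
rewrite !(@T_ext _ _ es _ (kR R st)) ?IH // => q _;
  rewrite /kR /st /k' /kR in_cons; case: eqP => [->|] //=; by rewrite pR.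
Qed.
End ClaimB.


Section Bip.
Variable K : graph.

Definition dcr : rel (K * bool) := fun a b => adj a.1 b.1 && (b.2 == ~~ a.2).

Lemma dcr_sym : symmetric dcr.
Proof.
move=> [x a] [y b]; rewrite /dcr /= adj_sym.
by case: a; case: b.
Qed.

Lemma walk_pos (p : seq (K * bool)) (a : K * bool) :
  path dcr a p -> 0 < pw (size p) a.1 (last a p).1 /\ (last a p).2 = odd (size p) (+) a.2.
Proof.
elim: p a => [|b p IH] a /=; first by rewrite pw0 ltr01.
case/andP => /andP[hab /eqP hb] /IH [h1 h2]; split.
  rewrite pwS; apply: (@sum_pos_term _ _ b.1).
    by move=> i; apply: mulr_ge0 => //; apply: pw_ge0.
  by rewrite hab mul1r.
by rewrite h2 hb; case: (odd _); case: a.2.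
Qed.

Lemma lift_conn (x y : K) b : connect (@adj K) x y -> exists b', connect dcr (x, b) (y, b').
Proof.
case/connectP => p pth ->; elim: p x b pth => [|c p IH] x b /=; first by exists b.
case/andP => hxc pth; have [b' h] := IH c (~~ b) pth; exists b'.
by apply: connect_trans h; apply: connect1; rewrite /dcr /= hxc eqxx.
Qed.

Lemma nonbip_odd : ~ bipartite K -> exists z : K, exists c, odd c /\ 0 < pw c z z.
Proof.
move=> nb.
case: (boolP [exists z, connect dcr (z, false) (z, true)]) => [/existsP [z hz]|/existsPn H].
  case/connectP: hz => p pth e; have [h1 h2] := walk_pos pth.
  exists z, (size p); rewrite -e /= in h1 h2; split => //.
  by move: h2; case: (odd _).
exfalso; apply: nb.
have cs := sym_connect_sym dcr_sym.
have ca : connect_sym (@adj K) := sym_connect_sym (@adj_sym K).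
exists (fun x => connect dcr (fingraph.root (@adj K) x, false) (x, false)).
move=> x y hxy.
have ry : fingraph.root (@adj K) y = fingraph.root (@adj K) x.
  by apply/esym/(fingraph.rootP ca); apply: connect1.
rewrite ry; set r := fingraph.root _ x.
have rx : connect (@adj K) r x by rewrite ca; exact: connect_root.
have ry' : connect (@adj K) r y by apply: connect_trans rx (connect1 hxy).
have dxy : forall b, dcr (x, b) (y, ~~ b) by move=> b; rewrite /dcr /= hxy eqxx.
apply/negP => /eqP e.
case cx: (connect dcr (r, false) (x, false)) e => e.
  have h1 : connect dcr (r, false) (y, true) by apply: connect_trans cx (connect1 (dxy false)).
  have := H y; rewrite (connect_trans _ h1) //.
  by rewrite cs.
have [bx hbx] := lift_conn false rx.
case: bx hbx => hbx; last by rewrite hbx in cx.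
have h1 : connect dcr (r, false) (y, false) by apply: connect_trans hbx (connect1 (dxy true)).
by rewrite h1 in e.
Qed.
End Bip.


Lemma hom_sum (F X : graph) : (hom F X)%:R = \sum_(f : {ffun F -> X}) ((is_hom f)%:R : rat).
Proof. by rewrite hom_gw; apply: eq_bigr => f _; rewrite PP_gw. Qed.

Lemma hom_prod (F G K : graph) : hom F (gprod G K) = (hom F G * hom F K)%N.
Proof.
apply/eqP; rewrite -(eqr_nat rat) natrM !hom_sum; apply/eqP.
rewrite mulr_suml; under [in RHS]eq_bigr do rewrite mulr_sumr.
rewrite pair_big /=.
rewrite (reindex (fun p : {ffun F -> G} * {ffun F -> K} => [ffun x => (p.1 x, p.2 x)] : {ffun F -> gprod G K})) //=; last first.
  exists (fun f : {ffun F -> gprod G K} => ([ffun x => (f x).1], [ffun x => (f x).2])).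
    by move=> [g h] _ /=; congr pair; apply/ffunP => x; rewrite !ffunE.
  by move=> f _; apply/ffunP => x; rewrite !ffunE -surjective_pairing.
apply: eq_bigr => -[g h] _ /=; rewrite -natrM mulnb; congr (nat_of_bool _)%:R.
apply/idP/idP.
  move/forallP => Hf; apply/andP; split; apply/forallP => x; apply/forallP => y;
    apply/implyP => hxy; have := Hf x; move/forallP/(_ y)/implyP/(_ hxy);
    rewrite !ffunE /= /prod_adj /= => /andP[].
    by [].
  by [].
case/andP => /forallP Hg /forallP Hh; apply/forallP => x; apply/forallP => y; apply/implyP => hxy.
rewrite !ffunE /= /prod_adj /=.
have := Hg x; move/forallP/(_ y)/implyP/(_ hxy) => ->.
by have := Hh x; move/forallP/(_ y)/implyP/(_ hxy) => ->.
Qed.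

Lemma main_gen (C : graph_class) (K : graph) :
  (forall F, C F -> simple F) -> closed_under_subdivisions C -> ~ bipartite K ->
  forall F G H : graph, C F -> hom_equiv (class_K C K) G H -> hom F G = hom F H.
Proof.
move=> Csimp Ccl nb F G H CF heq.
have [z [c [oc pc]]] := nonbip_odd nb.
pose es := [seq p <- enum {: F * F} | adj p.1 p.2 && (enum_rank p.1 < enum_rank p.2)%N].
have ues : uniq es := filter_uniq _ (enum_uniq _).
have mes : forall p, (p \in es) = adj p.1 p.2 && (enum_rank p.1 < enum_rank p.2)%N.
  by move=> p; rewrite mem_filter mem_enum andbT.
have Hadj : forall p, p \in es -> adj p.1 p.2 by move=> p; rewrite mes => /andP[].
have Hcov : forall x y, adj x y -> ((x, y) \in es) || ((y, x) \in es).
  move=> x y hxy; rewrite !mes /= hxy adj_sym hxy /=.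
  have nxy : x != y by apply: contraTneq hxy => ->; apply: Csimp.
  case: (ltngtP (enum_rank x) (enum_rank y)) => // e.
  move: nxy; rewrite -(inj_eq (@enum_rank_inj _)) => /negP h; exfalso; apply: h.
  by apply/eqP; apply: val_inj; exact: e.
have Hsw : forall p, p \in es -> adj p.1 p.2 && ((p.2, p.1) \notin es).
  move=> p; rewrite !mes /= => /andP[-> h] /=.
  by rewrite negb_and ltnNge (ltnW h) orbT.
pose t0 := (c./2).+1.
apply/eqP; rewrite -(eqr_nat rat) (hom_base Hadj Hcov G) (hom_base Hadj Hcov H); apply/eqP.
apply: (@claimB _ _ _ _ t0 ues) => s hs.
pose ln := fun x y => ((s x y).*2.-1)%N.
have lnE : forall x y, (ln x y).+2 = (s x y).*2.+1.
  by move=> x y; rewrite /ln; have := hs x y; rewrite /t0; lia.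
have eT : forall X, T X es (fun x y => (s x y).*2.+1) = T X es (fun x y => (ln x y).+2).
  by move=> X; apply: T_ext => p _; rewrite lnE.
rewrite !eT -!(hom_sub Hcov).
have CS : C (sg (slist ln es)) := C_slist ln Ccl CF ues Hsw.
have hK : (0 < hom (sg (slist ln es)) K)%N.
  rewrite -(ltr0n rat) (hom_sub Hcov); apply: (@T_pos _ _ _ _ z) => p _.
  rewrite lnE; apply: pw_pos_odd pc oc _ _; have := hs p.1 p.2; rewrite /t0; lia.
by rewrite (heq _ (conj CS hK)).
Qed.

Theorem theorem43 (C : graph_class) :
  (forall F, C F -> simple F) ->
  closed_under_subdivisions C ->
  forall K : graph, ~ bipartite K ->
    (forall F, C F -> cl (class_K C K) F) /\
    admits_cancellation (hom_equiv C) K.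
Proof.
move=> Csimp Ccl K nb; split.
  move=> F CF; split; first exact: Csimp.
  by move=> G H _ _ heq; apply: (main_gen Csimp Ccl nb CF heq).
move=> G H heq F CF; apply: (main_gen Csimp Ccl nb CF) => F' [CF' hK'].
have := heq F' CF'; rewrite !hom_prod => /eqP; by rewrite eqn_pmul2r // => /eqP.
Qed.
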